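(* Let $R$ be a commutative noetherian local ring containing $\mathbf{Z}_p$ as a subring, let $A=R/pR$ with maximal ideal $\mathfrak{m}$, and let $(n_i(A))_{i\ge1}$ be the non-decreasing sequence of integers in which each integer $k\ge0$ occurs exactly $\dim_{A/\mathfrak{m}}\mathfrak{m}^k/\mathfrak{m}^{k+1}$ times. Let $r_1,\dots,r_s\in R$ and let $\phi_1,\dots,\phi_s:R\to\mathbf{Z}_p$ be ring homomorphisms. Then the determinant of the $s\times s$ matrix $(\phi_i(r_j))$ is divisible by $p^{A(s)}$, where $A(s)=n_1(A)+n_2(A)+\dots+n_s(A)$. *)

(* Defs.v *)
From HB Require Import structures.
From mathcomp Require Import all_boot all_algebra.
From mathcomp Require Import boolp.

Set Implicit Arguments.
Unset Strict Implicit.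
Unset Printing Implicit Defensive.

Import GRing.Theory Num.Theory.
Local Open Scope ring_scope.

(* The ring Z_p of p-adic integers, built as the inverse limit of Z/p^n Z:    *)
(* an element is a sequence x : nat -> int with x n = x (n+1) mod p^n, which  *)
(* forces 0 <= x n < p^n (canonical residues) and compatibility.              *)
(* As for 'Z_p in MathComp, the modulus used is maxn p 2, so that Zpadic p is a   *)
(* genuine nonzero ring for every p; for a prime p (the only case used) the   *)
(* modulus is p itself.                                                       *)

Section PadicIntegers.
Variable p : nat.
Definition zp_base : int := (maxn p 2)%:Z.
Definition zp_mod (n : nat) : int := zp_base ^+ n.

Definition zp_compat (x : nat -> int) : Prop :=
  forall n, x n = modz (x n.+1) (zp_mod n).

Definition Zpadic : Type := {x : nat -> int | zp_compat x}.

HB.instance Definition _ := gen_eqMixin Zpadic.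
HB.instance Definition _ := gen_choiceMixin Zpadic.

Lemma zp_mod_gt0 n : 0 < zp_mod n.
Proof.
rewrite /zp_mod exprn_gt0 // /zp_base ltz_nat.
by apply: leq_trans (leq_maxr p 2).
Qed.

Lemma modz_modM (a d q : int) : modz (modz a (d * q)) d = modz a d.
Proof.
rewrite [in RHS](divz_eq a (d * q)).
by rewrite mulrA mulrAC modzMDl.
Qed.

Lemma zp_mod_succ (a : int) n : modz (modz a (zp_mod n.+1)) (zp_mod n) = modz a (zp_mod n).
Proof. by rewrite /zp_mod exprSr modz_modM. Qed.

Lemma zp_norm (x : Zpadic) n : modz (sval x n) (zp_mod n) = sval x n.
Proof. by rewrite (svalP x n) modz_mod. Qed.

Lemma zp_valP (x : Zpadic) n : sval x n = modz (sval x n.+1) (zp_mod n).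
Proof. exact: (svalP x n). Qed.

Definition zp_lift (f : nat -> int) : nat -> int := fun n => modz (f n) (zp_mod n).

Lemma zp_lift_compat (f : nat -> int) :
  (forall n, modz (f n) (zp_mod n) = modz (f n.+1) (zp_mod n)) -> zp_compat (zp_lift f).
Proof. by move=> hf n; rewrite /zp_lift zp_mod_succ hf. Qed.

Lemma zp_compat0 : zp_compat (fun _ => 0).
Proof. by move=> n; rewrite mod0z. Qed.
Definition zp0 : Zpadic := exist _ _ zp_compat0.

Lemma zp_compat1 : zp_compat (zp_lift (fun _ => 1)).
Proof. exact: zp_lift_compat. Qed.
Definition zp1 : Zpadic := exist _ _ zp_compat1.

Lemma zp_compatD (x y : Zpadic) : zp_compat (zp_lift (fun n => sval x n + sval y n)).
Proof.
apply: zp_lift_compat => n.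
by rewrite (zp_valP x n) (zp_valP y n) modzDml modzDmr.
Qed.
Definition zpD (x y : Zpadic) : Zpadic := exist _ _ (zp_compatD x y).

Lemma zp_compatN (x : Zpadic) : zp_compat (zp_lift (fun n => - sval x n)).
Proof.
apply: zp_lift_compat => n.
by rewrite (zp_valP x n) -modzNm modz_mod modzNm.
Qed.
Definition zpN (x : Zpadic) : Zpadic := exist _ _ (zp_compatN x).

Lemma zp_compatM (x y : Zpadic) : zp_compat (zp_lift (fun n => sval x n * sval y n)).
Proof.
apply: zp_lift_compat => n.
by rewrite (zp_valP x n) (zp_valP y n) modzMml modzMmr.
Qed.
Definition zpM (x y : Zpadic) : Zpadic := exist _ _ (zp_compatM x y).

Lemma zp_eqP (x y : Zpadic) : (forall n, sval x n = sval y n) -> x = y.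
Proof.
move: x y => [x hx] [y hy] /= h.
have exy : x = y by apply: funext.
by subst y; congr exist; apply: Prop_irrelevance.
Qed.

Lemma zpA : associative zpD.
Proof.
move=> x y z; apply: zp_eqP => n /=; rewrite /zp_lift.
by rewrite modzDml modzDmr addrA.
Qed.

Lemma zpC : commutative zpD.
Proof. by move=> x y; apply: zp_eqP => n /=; rewrite /zp_lift addrC. Qed.

Lemma zp0D : left_id zp0 zpD.
Proof. by move=> x; apply: zp_eqP => n /=; rewrite /zp_lift add0r zp_norm. Qed.

Lemma zpND : left_inverse zp0 zpN zpD.
Proof.
move=> x; apply: zp_eqP => n /=; rewrite /zp_lift.
by rewrite modzDml addNr mod0z.
Qed.

HB.instance Definition _ := GRing.isZmodule.Build Zpadic zpA zpC zp0D zpND.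

Lemma zpMA : associative zpM.
Proof.
move=> x y z; apply: zp_eqP => n /=; rewrite /zp_lift.
by rewrite modzMml modzMmr mulrA.
Qed.

Lemma zpMC : commutative zpM.
Proof. by move=> x y; apply: zp_eqP => n /=; rewrite /zp_lift mulrC. Qed.

Lemma zp1M : left_id zp1 zpM.
Proof. by move=> x; apply: zp_eqP => n /=; rewrite /zp_lift modzMml mul1r zp_norm. Qed.

Lemma zpMDl : left_distributive zpM zpD.
Proof.
move=> x y z; apply: zp_eqP => n /=; rewrite /zp_lift.
by rewrite modzMml mulrDl modzDml modzDmr.
Qed.

Lemma zp1_neq0 : zp1 != 0.
Proof.
apply/eqP => /(congr1 (fun x : Zpadic => sval x 1%N)) /=.
rewrite /zp_lift /zp_mod expr1 modz_small //.
rewrite /zp_base ltz_nat /=.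
by apply: leq_trans (leq_maxr p 2).
Qed.

HB.instance Definition _ :=
  GRing.Zmodule_isComNzRing.Build Zpadic zpMA zpMC zp1M zpMDl zp1_neq0.

End PadicIntegers.

Section Ideals.
Variable R : comNzRingType.

Definition is_ideal (I : R -> Prop) : Prop :=
  [/\ I 0, (forall x y, I x -> I y -> I (x + y)) & (forall a x, I x -> I (a * x))].

Definition is_maximal_ideal (M : R -> Prop) : Prop :=
  [/\ is_ideal M, ~ M 1 &
      forall J : R -> Prop, is_ideal J -> ~ J 1 ->
        (forall x, M x -> J x) -> forall x, J x -> M x].

Definition is_local_ring : Prop :=
  exists M : R -> Prop, is_maximal_ideal M /\
    forall M' : R -> Prop, is_maximal_ideal M' -> forall x, M' x <-> M x.

Definition is_noetherian : Prop :=
  forall I : R -> Prop, is_ideal I ->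
    exists (n : nat) (g : 'I_n -> R),
      forall x, I x <-> exists a : 'I_n -> R, x = \sum_(i < n) a i * g i.

Definition ideal_mul (I J : R -> Prop) : R -> Prop :=
  fun x => exists (n : nat) (a b : 'I_n -> R),
    [/\ forall i, I (a i), forall i, J (b i) & x = \sum_(i < n) a i * b i].

Fixpoint ideal_pow (I : R -> Prop) (k : nat) : R -> Prop :=
  match k with
  | 0%N => fun _ => True
  | k'.+1 => ideal_mul I (ideal_pow I k')
  end.

(* For a maximal ideal m of R: the family x : 'I_d -> R of elements of m^k   *)
(* maps to a basis of the (R/m)-vector space m^k/m^(k+1).  (Scalars of R/m   *)
(* are represented by elements a of R, and a is zero in R/m iff a \in m.)    *)
Definition graded_basis (m : R -> Prop) (k d : nat) (x : 'I_d -> R) : Prop :=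
  [/\ forall i, ideal_pow m k (x i),
      forall y, ideal_pow m k y ->
        exists a : 'I_d -> R, ideal_pow m k.+1 (y - \sum_(i < d) a i * x i)
    &
      forall a : 'I_d -> R, ideal_pow m k.+1 (\sum_(i < d) a i * x i) ->
        forall i, m (a i)].

Definition graded_dim (m : R -> Prop) (k d : nat) : Prop :=
  exists x : 'I_d -> R, graded_basis m k x.

End Ideals.

(* The non-decreasing sequence (n_i)_{i>=1} in which each k >= 0 occurs       *)
(* exactly dims k times: its i-th term is k iff                               *)
(*   dims 0 + ... + dims (k-1) < i <= dims 0 + ... + dims k.                   *)
Definition is_nth_term (dims : nat -> nat) (i k : nat) : Prop :=
  (\sum_(j < k) dims j < i <= \sum_(j < k.+1) dims j)%N.

(* Main.v *)
Require Import Defs.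
From HB Require Import structures.
From mathcomp Require Import all_boot all_order all_algebra boolp.
From mathcomp Require Import ring zify.

Set Implicit Arguments.
Unset Strict Implicit.
Unset Printing Implicit Defensive.
Import Order.TTheory GRing.Theory Num.Theory.
Local Open Scope ring_scope.


Section ZpFacts.
Variable p : nat.
Hypothesis pP : prime p.
Local Notation Zp := (Zpadic p).
Local Notation P := (p%:Z).

Lemma zp_base_p : zp_base p = P.
Proof. rewrite /zp_base; congr Posz; apply/maxn_idPl; exact: prime_gt1. Qed.

Lemma zp_modE n : zp_mod p n = P ^+ n.
Proof. by rewrite /zp_mod zp_base_p. Qed.

Lemma P_gt0 : 0 < P.
Proof. by rewrite ltz_nat prime_gt0. Qed.

Lemma svalD (x y : Zp) n : sval (x + y) n = modz (sval x n + sval y n) (zp_mod p n).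
Proof. by []. Qed.
Lemma svalM (x y : Zp) n : sval (x * y) n = modz (sval x n * sval y n) (zp_mod p n).
Proof. by []. Qed.
Lemma svalN (x : Zp) n : sval (- x) n = modz (- sval x n) (zp_mod p n).
Proof. by []. Qed.
Lemma sval0 n : sval (0 : Zp) n = 0.
Proof. by []. Qed.
Lemma sval1 n : sval (1 : Zp) n = modz 1 (zp_mod p n).
Proof. by []. Qed.

Lemma sval_nat k n : sval (k%:R : Zp) n = modz k%:Z (zp_mod p n).
Proof.
elim: k => [|k IH]; first by rewrite sval0 mod0z.
by rewrite mulrS svalD sval1 IH modzDml modzDmr intS.
Qed.

Lemma zp_val_le (z : Zp) n j : sval z n = modz (sval z (n + j)%N) (zp_mod p n).
Proof.
elim: j => [|j IH]; first by rewrite addn0 zp_norm.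
rewrite IH (zp_valP z (n + j)) addnS.
by rewrite [zp_mod p (n + j)]/zp_mod exprD modz_modM.
Qed.

Lemma sval1_range (z : Zp) : 0 <= sval z 1 < P.
Proof.
rewrite -zp_norm zp_modE expr1 modz_ge0 ?ltz_pmod ?P_gt0 //.
by rewrite gt_eqF // P_gt0.
Qed.

Lemma zp_dvd_p (z : Zp) : sval z 1 = 0 -> exists c : Zp, z = p%:R * c.
Proof.
move=> z1.
have hdiv n : sval z n.+1 = (divz (sval z n.+1) P) * P.
  have h : modz (sval z n.+1) P = 0.
    by rewrite -z1 (zp_val_le z 1 n) zp_modE expr1.
  by rewrite {1}(divz_eq (sval z n.+1) P) h addr0.
have Pn0 : P != 0 by rewrite gt_eqF // P_gt0.
set c := fun n => divz (sval z n.+1) P.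
have cc : zp_compat p c.
  move=> n; rewrite /c.
  have e : sval z n.+1 = (modz (divz (sval z n.+2) P) (zp_mod p n)) * P.
    rewrite (zp_valP z n.+1) {1}hdiv mulz_modl ?P_gt0 //.
    by rewrite /zp_mod exprSr zp_base_p.
  by rewrite e mulzK.
exists (exist _ c cc); apply: zp_eqP => n.
rewrite svalM sval_nat /= modzMml /c zp_modE.
rewrite [P * _]mulrC -hdiv.
by rewrite (zp_valP z n) zp_modE.
Qed.

End ZpFacts.


Section Comb.
Variable w : nat -> nat.
Hypothesis hw : forall a b, (a <= b)%N -> (w a <= w b)%N.

Lemma comb_path S : forall a x, (a <= x.+1)%N -> path ltn x S ->
  (\sum_(t < size S) w (a + t) <= \sum_(y <- S) w y)%N.
Proof.
elim: S => [|y S IH] a x hax /=; first by rewrite big_ord0.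
move=> /andP[hxy hp].
rewrite big_ord_recl big_cons addn0.
apply: leq_add; first by apply: hw; apply: leq_trans hax hxy.
have -> : \sum_(i < size S) w (a + lift ord0 i) = \sum_(i < size S) w (a.+1 + i).
  by apply: eq_bigr => i _; rewrite /= addnS addSn.
apply: IH hp; by rewrite ltnS; apply: leq_trans hax hxy.
Qed.

Lemma comb_sorted S : sorted ltn S ->
  (\sum_(t < size S) w t <= \sum_(y <- S) w y)%N.
Proof.
case: S => [|y S] /=; first by rewrite big_ord0.
move=> hp; rewrite big_ord_recl big_cons; set T := (X in (_ + X <= _)%N).
have -> : T = \sum_(i < size S) w (1 + i) by apply: eq_bigr.
apply: leq_add; first exact: hw.
exact: comb_path hp.
Qed.

Lemma comb_uniq S : uniq S -> (\sum_(t < size S) w t <= \sum_(y <- S) w y)%N.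
Proof.
move=> hu.
have hp : perm_eq (sort leq S) S by rewrite (perm_sort leq S).
rewrite -(perm_big _ hp) /= -(perm_size hp) /=.
apply: comb_sorted.
rewrite ltn_sorted_uniq_leq (perm_uniq hp) /= hu /=.
apply: sort_sorted; exact: leq_total.
Qed.

Lemma comb_inj n (f : 'I_n -> nat) : injective f ->
  (\sum_(t < n) w t <= \sum_(j < n) w (f j))%N.
Proof.
move=> hf.
have hu : uniq (map f (enum 'I_n)) by rewrite map_inj_uniq ?enum_uniq.
have := comb_uniq hu.
by rewrite size_map size_enum_ord big_map big_enum.
Qed.
End Comb.


Section Dvd.
Variable (K : comNzRingType) (q : K).
Definition pdvd (k : nat) (z : K) := exists c, z = q ^+ k * c.

Lemma pdvd0 k : pdvd k 0.
Proof. by exists 0; rewrite mulr0. Qed.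

Lemma pdvdD k x y : pdvd k x -> pdvd k y -> pdvd k (x + y).
Proof. by move=> [a ->] [b ->]; exists (a + b); rewrite mulrDr. Qed.

Lemma pdvdMl k x y : pdvd k y -> pdvd k (x * y).
Proof. by move=> [b ->]; exists (x * b); rewrite mulrCA. Qed.

Lemma pdvdMr k x y : pdvd k x -> pdvd k (x * y).
Proof. by move=> h; rewrite mulrC; apply: pdvdMl. Qed.

Lemma pdvd_le k l x : (k <= l)%N -> pdvd l x -> pdvd k x.
Proof.
move=> hkl [c ->]; exists (q ^+ (l - k) * c).
by rewrite mulrA -exprD subnKC.
Qed.

Lemma pdvdM k l x y : pdvd k x -> pdvd l y -> pdvd (k + l) (x * y).
Proof.
move=> [a ->] [b ->]; exists (a * b).
by rewrite exprD; rewrite -!mulrA; congr (_ * _); rewrite mulrCA.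
Qed.

Lemma pdvd_exp k : pdvd k (q ^+ k).
Proof. by exists 1; rewrite mulr1. Qed.

Lemma pdvd_sum I (r : seq I) (P : pred I) (F : I -> K) k :
  (forall i, P i -> pdvd k (F i)) -> pdvd k (\sum_(i <- r | P i) F i).
Proof.
move=> h; apply: (big_ind (pdvd k)) => //; [exact: pdvd0 | exact: pdvdD].
Qed.

Lemma det_rows_dvd n (A : 'M[K]_n) (a : 'I_n -> nat) :
  (forall i j, pdvd (a i) (A i j)) -> pdvd (\sum_i a i) (\det A).
Proof.
move=> h.
have [f hf] := choice (fun ij : 'I_n * 'I_n => h ij.1 ij.2).
exists (\det (\matrix_(i, j) f (i, j))).
have -> : A = diag_mx (\row_i (q ^+ a i)) *m \matrix_(i, j) f (i, j).
  by apply/matrixP => i j; rewrite mul_diag_mx !mxE (hf (i, j)).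
rewrite det_mulmx det_diag.
under eq_bigr => i _ do rewrite mxE.
by rewrite prodrXr.
Qed.

Definition rep n (A : 'M[K]_n) (i0 : 'I_n) (v : 'rV[K]_n) : 'M[K]_n :=
  \matrix_(i, j) if i == i0 then v 0 j else A i j.

Lemma row_rep n (A : 'M[K]_n) i0 v j :
  row j (rep A i0 v) = if j == i0 then v else row j A.
Proof.
apply/rowP => k; rewrite [LHS]mxE [LHS]mxE.
case: (j =P i0) => [_|_]; last by rewrite mxE.
by congr (v _ k); apply: val_inj.
Qed.

Lemma det_rep n (A : 'M[K]_n) i0 v :
  \det (rep A i0 v) = \sum_j v 0 j * cofactor A i0 j.
Proof.
rewrite (expand_det_row _ i0); apply: eq_bigr => j _.
rewrite mxE eqxx; congr (_ * _).
rewrite /cofactor; congr (_ * \det _).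
apply/matrixP => i k; rewrite !mxE.
by rewrite eq_sym (negbTE (neq_lift i0 i)).
Qed.

Lemma det_rep_self n (A : 'M[K]_n) i0 : \det A = \det (rep A i0 (row i0 A)).
Proof. by rewrite det_rep (expand_det_row _ i0); apply: eq_bigr => j _; rewrite mxE. Qed.

Lemma det_rep_sum n (A : 'M[K]_n) i0 D (g : nat -> K) (E : nat -> 'rV[K]_n) c u :
  \det (rep A i0 (\sum_(t < D) g t *: E t + c *: u)) =
  \sum_(t < D) g t * \det (rep A i0 (E t)) + c * \det (rep A i0 u).
Proof.
rewrite !det_rep.
under eq_bigr => j _ do rewrite !mxE summxE mulrDl.
rewrite big_split /=; congr (_ + _).
  under eq_bigr => j _ do rewrite mulr_suml.
  rewrite exchange_big /=; apply: eq_bigr => t _.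
  rewrite det_rep mulr_sumr; apply: eq_bigr => j _.
  by rewrite mxE mulrA.
rewrite mulr_sumr; apply: eq_bigr => j _.
by rewrite mulrA.
Qed.

Variables (n D N B : nat) (E : nat -> 'rV[K]_n) (w : nat -> nat).
Hypothesis hE : forall t, (t < D)%N -> forall j, pdvd (w t) (E t 0 j).
Hypothesis hw : forall a b, (a <= b)%N -> (w a <= w b)%N.
Hypothesis hB : (B <= \sum_(t < n) w t)%N.
Hypothesis hN : (B <= N)%N.

Definition spanv (v : 'rV[K]_n) :=
  exists (g : nat -> K) (u : 'rV[K]_n), v = \sum_(t < D) g t *: E t + q ^+ N *: u.
Definition atomv (v : 'rV[K]_n) :=
  (exists2 t, (t < D)%N & v = E t) \/ (exists u, v = q ^+ N *: u).

Lemma atom_span v : atomv v -> spanv v.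
Proof.
case=> [[t ht ->]|[u ->]].
  exists (fun t' => (t' == t)%:R), 0; rewrite scaler0 addr0.
  rewrite (bigD1 (Ordinal ht)) //= eqxx scale1r big1 ?addr0 //.
  move=> i hi; have -> : (nat_of_ord i == t) = false.
    by apply/negbTE; apply: contra hi => /eqP hi; apply/eqP/val_inj.
  by rewrite scale0r.
exists (fun _ => 0), u; rewrite big1 ?add0r // => i _; exact: scale0r.
Qed.

Lemma det_atoms (A : 'M[K]_n) : (forall j, atomv (row j A)) -> pdvd B (\det A).
Proof.
move=> ha.
case: (pselect (exists j, exists u, row j A = q ^+ N *: u)).
  move=> [j [u hu]].
  apply: (pdvd_le hN).
  have := @det_rows_dvd n A (fun i => if i == j then N else 0%N).
  rewrite (bigD1 j) //= eqxx big1 ?addn0; last by move=> i /negbTE ->.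
  apply => i k; case: eqP => [->|_]; last by exists (A i k); rewrite expr0 mul1r.
  have := congr1 (fun M : 'rV[K]_n => M 0 k) hu; rewrite !mxE => ->.
  exact: pdvdMr (pdvd_exp N).
move=> hno.
have hf : forall j, exists t, (t < D)%N /\ row j A = E t.
  move=> j; case: (ha j) => [[t ht e]|hu]; first by exists t.
  by exfalso; apply: hno; exists j.
have [f hfP] := choice hf.
have eA j k : A j k = E (f j) 0 k.
  by have := congr1 (fun M : 'rV[K]_n => M 0 k) (proj2 (hfP j)); rewrite !mxE.
case: (boolP (injectiveb f)) => [/injectiveP finj | /injectivePn [j1 [j2 hne heq]]].
  apply: (@pdvd_le B (\sum_j w (f j))).
    apply: leq_trans hB _; exact: comb_inj.
  apply: det_rows_dvd => i k; rewrite eA; exact: hE (proj1 (hfP i)) k.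
rewrite (determinant_alternate hne); first exact: pdvd0.
by move=> k; rewrite !eA heq.
Qed.

Lemma det_span (A : 'M[K]_n) : (forall j, spanv (row j A)) -> pdvd B (\det A).
Proof.
suff Q : forall k (A : 'M[K]_n), (forall j : 'I_n, (k <= j)%N -> atomv (row j A)) ->
    (forall j, spanv (row j A)) -> pdvd B (\det A).
  by apply: (Q n) => j; rewrite leqNgt ltn_ord.
elim => [|k IH] A0 hat hsp; first by apply: det_atoms => j; apply: hat.
case: (ltnP k n) => hk; last first.
  apply: IH hsp => j hj; apply: hat.
  rewrite ltn_neqAle hj andbT; apply/eqP => ejk.
  by move: (ltn_ord j); rewrite -ejk ltnNge hk.
set j0 := Ordinal hk.
have [g [u hu]] := hsp j0.
rewrite (det_rep_self A0 j0) hu det_rep_sum.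
have hrows v : atomv v -> (forall j : 'I_n, (k <= j)%N -> atomv (row j (rep A0 j0 v))) /\
    (forall j, spanv (row j (rep A0 j0 v))).
  move=> hv; split=> j; rewrite row_rep; case: eqP => [_|hne].
  - by move=> _; exact: hv.
  - move=> hkj; apply: hat; rewrite ltn_neqAle hkj andbT.
    by apply/eqP => ekj; apply: hne; apply: val_inj.
  - exact: atom_span.
  - exact: hsp.
apply: pdvdD.
  apply: pdvd_sum => t _; apply: pdvdMl.
  have [h1 h2] := hrows (E t) (or_introl (ex_intro2 _ _ (nat_of_ord t) (ltn_ord t) erefl)).
  exact: IH h1 h2.
apply: pdvdMr; exact: pdvd_le hN (pdvd_exp N).
Qed.
End Dvd.


Section IdealFacts.
Variable T : comNzRingType.
Implicit Types I J : T -> Prop.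

Lemma imul0 I J : ideal_mul I J 0.
Proof. by exists 0%N, (fun _ => 0), (fun _ => 0); split=> //; [case|case|rewrite big_ord0]. Qed.

Lemma imul1 I J a b : I a -> J b -> ideal_mul I J (a * b).
Proof.
move=> ha hb; exists 1%N, (fun _ => a), (fun _ => b); split=> //.
by rewrite big_ord1.
Qed.

Lemma imulD I J x y : ideal_mul I J x -> ideal_mul I J y -> ideal_mul I J (x + y).
Proof.
move=> [n1 [a1 [b1 [ha1 hb1 ->]]]] [n2 [a2 [b2 [ha2 hb2 ->]]]].
pose a i := match split i with inl i1 => a1 i1 | inr i2 => a2 i2 end.
pose b i := match split i with inl i1 => b1 i1 | inr i2 => b2 i2 end.
exists (n1 + n2)%N, a, b; split.
- by move=> i; rewrite /a; case: split.
- by move=> i; rewrite /b; case: split.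
rewrite big_split_ord /=; congr (_ + _); apply: eq_bigr => i _.
  by rewrite /a /b -[lshift _ _]/(unsplit (inl i)) unsplitK.
by rewrite /a /b -[rshift _ _]/(unsplit (inr i)) unsplitK.
Qed.

Lemma ipow0 I k : ideal_pow I k 0.
Proof. by case: k => //= k; apply: imul0. Qed.

Lemma ipowD I k x y : ideal_pow I k x -> ideal_pow I k y -> ideal_pow I k (x + y).
Proof. by case: k => //= k; apply: imulD. Qed.

Lemma ipow_sum I k (r : seq nat) (F : nat -> T) :
  (forall i, ideal_pow I k (F i)) -> ideal_pow I k (\sum_(i <- r) F i).
Proof. move=> h; apply: big_ind => //; [exact: ipow0 | exact: ipowD]. Qed.

Lemma ipow_sum_ord I k n (F : 'I_n -> T) :
  (forall i, ideal_pow I k (F i)) -> ideal_pow I k (\sum_(i < n) F i).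
Proof. move=> h; apply: big_ind => //; [exact: ipow0 | exact: ipowD]. Qed.

Lemma idealN I x : is_ideal I -> I x -> I (- x).
Proof. by move=> [_ _ hm] hx; rewrite -mulN1r; apply: hm. Qed.

End IdealFacts.


Section Main.
Variable p : nat.
Hypothesis pP : prime p.
Variable R : comNzRingType.
Hypothesis R_local : is_local_ring R.
Variable A : comNzRingType.
Variable pi : {rmorphism R -> A}.
Hypothesis pi_surj : forall a : A, exists r : R, pi r = a.
Hypothesis pi_ker : forall r : R, pi r = 0 <-> exists t : R, r = p%:R * t.
Variable m : A -> Prop.
Hypothesis m_max : is_maximal_ideal m.

Local Notation Zp := (Zpadic p).
Definition Mset (x : R) := m (pi x).
Definition Kphi (f : {rmorphism R -> Zp}) (x : R) := sval (f x) 1 = 0.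

Lemma Mset_max : is_maximal_ideal Mset.
Proof.
have [[m0 mD mM] m1 mmax] := m_max.
split.
- split; rewrite /Mset ?rmorph0 //.
  + by move=> x y hx hy; rewrite rmorphD; apply: mD.
  + by move=> a x hx; rewrite rmorphM; apply: mM.
- by rewrite /Mset rmorph1.
move=> J [J0 JD JM] J1 hMJ x hx.
pose J' := fun y : A => exists x, J x /\ pi x = y.
have J'id : is_ideal J'.
  split.
  - by exists 0; rewrite rmorph0.
  - move=> _ _ [x1 [h1 <-]] [x2 [h2 <-]]; exists (x1 + x2); rewrite rmorphD; split=> //.
    exact: JD.
  - move=> a _ [x1 [h1 <-]]; have [a' <-] := pi_surj a.
    by exists (a' * x1); rewrite rmorphM; split=> //; apply: JM.
have nJ'1 : ~ J' 1.
  move=> [y [hy e]]; apply: J1.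
  have hy1 : J (y - 1).
    by apply: hMJ; rewrite /Mset rmorphB rmorph1 e subrr.
  have -> : 1 = y + (-1) * (y - 1) by ring.
  by apply: JD => //; apply: JM.
apply: (mmax J' J'id nJ'1); last by exists x.
move=> y hy; have [x' ex] := pi_surj y; exists x'; split=> //.
by apply: hMJ; rewrite /Mset ex.
Qed.

Lemma mod1p : modz 1 (zp_mod p 1) = 1.
Proof. by rewrite (zp_modE pP) expr1 modz_small // ltz_nat prime_gt1. Qed.

Lemma Kphi_max f : is_maximal_ideal (Kphi f).
Proof.
split.
- split; rewrite /Kphi.
  + by rewrite rmorph0.
  + by move=> x y hx hy; rewrite rmorphD svalD hx hy addr0 mod0z.
  + by move=> a x hx; rewrite rmorphM svalM hx mulr0 mod0z.
- by rewrite /Kphi rmorph1 sval1 mod1p.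
move=> J [J0 JD JM] J1 hKJ x hx.
rewrite /Kphi; set v := sval (f x) 1.
case: (v =P 0) => // hv; exfalso.
have /andP[v0 vp] := sval1_range pP (f x).
rewrite -/v in v0 vp.
set v' := absz v.
have ev : v'%:Z = v by rewrite /v' abszE ger0_norm.
have [a _ ha] := Bezoutl v' (prime_gt0 pP).
have hg : gcdn p v' = 1%N.
  apply/eqP; rewrite -/(coprime p v') prime_coprime //.
  apply/negP => /dvdn_leq h.
  have v'0 : (0 < v')%N by rewrite lt0n; apply/eqP => e0; apply: hv; rewrite -ev e0.
  move: (h v'0); rewrite leqNgt; apply/negP/negPn.
  by rewrite -ltz_nat ev.
rewrite hg in ha.
have [k hk] := dvdnP ha.
have hy : Kphi f (a%:R * x + 1).
  rewrite /Kphi rmorphD rmorphM rmorph_nat rmorph1 svalD svalM sval_nat sval1 -/v.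
  rewrite (zp_modE pP) expr1 modzMml modzDml modzDmr -ev.
  have -> : (a%:Z * v'%:Z + 1 = (k * p)%N%:Z) by rewrite -hk PoszD PoszM addrC.
  by rewrite PoszM modzMl.
have := JD _ _ (hKJ _ hy) (JM (-1) _ (JM a%:R _ hx)).
have -> : a%:R * x + 1 + (-1) * (a%:R * x) = 1 by ring.
exact: J1.
Qed.

Lemma Mset_Kphi f x : Mset x <-> Kphi f x.
Proof.
have [M0 [hM0 huniq]] := R_local.
have h1 := huniq _ Mset_max x; have h2 := huniq _ (Kphi_max f) x.
tauto.
Qed.

Lemma residue (f : {rmorphism R -> Zp}) (a : A) : exists c : nat, m (a - c%:R).
Proof.
have [x <-] := pi_surj a.
have /andP[v0 vp] := sval1_range pP (f x).
exists (absz (sval (f x) 1)).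
have : Kphi f (x - (absz (sval (f x) 1))%:R).
  rewrite /Kphi rmorphB rmorph_nat svalD svalN sval_nat.
  rewrite (zp_modE pP) expr1 modzNm modzDmr abszE ger0_norm // subrr mod0z //.
move/(Mset_Kphi f); by rewrite /Mset rmorphB rmorph_nat.
Qed.

Lemma phi_dvd (f : {rmorphism R -> Zp}) k e : ideal_pow Mset k e -> pdvd (p%:R : Zp) k (f e).
Proof.
elim: k e => [|k IH] e /=.
  by move=> _; exists (f e); rewrite expr0 mul1r.
move=> [n [a [b [ha hb ->]]]].
rewrite rmorph_sum; apply: pdvd_sum => i _; rewrite rmorphM.
have [c hc] : exists c, f (a i) = p%:R * c by apply: (zp_dvd_p pP); apply: (proj1 (Mset_Kphi f (a i))).
rewrite hc -add1n; apply: pdvdM; last exact: IH.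
by exists c; rewrite expr1.
Qed.

Lemma lift_pow k y : ideal_pow m k y -> exists e, pi e = y /\ ideal_pow Mset k e.
Proof.
elim: k y => [|k IH] y /=.
  by move=> _; have [e he] := pi_surj y; exists e.
move=> [n [a [b [ha hb ->]]]].
have [a' ha'] := choice (fun i => pi_surj (a i)).
have [b' hb'] := choice (fun i => IH _ (hb i)).
exists (\sum_(i < n) a' i * b' i); split.
  by rewrite rmorph_sum; apply: eq_bigr => i _; rewrite rmorphM ha' (proj1 (hb' i)).
exists n, a', b'; split=> // i; last exact: (proj2 (hb' i)).
by rewrite /Mset ha'; apply: ha.
Qed.


Section Enum.
Variable dims : nat -> nat.
Variable xn : nat -> nat -> A.
Hypothesis hxn : forall k, graded_basis m k (fun i : 'I_(dims k) => xn k i).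
Hypothesis hxn0 : forall k i, (dims k <= i)%N -> xn k i = 0.
Variable phi0 : {rmorphism R -> Zp}.
Variable N : nat.

Definition S k := (\sum_(0 <= j < k) dims j)%N.
Definition blk t := (\sum_(0 <= k < N) (S k.+1 <= t))%N.
Definition xs t := xn (blk t) (t - S (blk t)).

Lemma xn_in k i : ideal_pow m k (xn k i).
Proof.
case: (ltnP i (dims k)) => hi; last by rewrite hxn0 //; apply: ipow0.
have [h _ _] := hxn k; exact: (h (Ordinal hi)).
Qed.

Lemma xs_in t : ideal_pow m (blk t) (xs t).
Proof. exact: xn_in. Qed.

Lemma S_mono a b : (a <= b)%N -> (S a <= S b)%N.
Proof. by move=> hab; rewrite /S (big_cat_nat (leq0n a) hab) /= leq_addr. Qed.

Lemma S_succ k : S k.+1 = (S k + dims k)%N.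
Proof. by rewrite /S big_nat_recr. Qed.

Lemma sum_lt n K : (\sum_(0 <= k < n) (k < K))%N = minn K n.
Proof.
elim: n => [|n IH]; first by rewrite big_geq // minn0.
rewrite big_nat_recr //= IH; case: (ltnP n K) => h /=; lia.
Qed.

Lemma blk_eq K t : (K < N)%N -> (S K <= t < S K.+1)%N -> blk t = K.
Proof.
move=> hKN /andP[h1 h2].
rewrite /blk (eq_big_nat _ _ (F2 := fun k => nat_of_bool (k < K)%N)) ?sum_lt.
  lia.
move=> k /andP[_ hk]; congr nat_of_bool.
case: (ltnP k K) => hkK.
  by apply: leq_trans (S_mono hkK) h1.
apply/negbTE; rewrite -ltnNge; apply: leq_trans h2 _; apply: S_mono; by rewrite ltnS.
Qed.

Lemma blk_mono a b : (a <= b)%N -> (blk a <= blk b)%N.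
Proof.
move=> hab; apply: leq_sum => k _.
by case: (leqP (S k.+1) a) => h //=; rewrite (leq_trans h hab).
Qed.

Lemma A_decomp K : (K <= N)%N -> forall z : A, exists c : nat -> nat,
  ideal_pow m K (z - \sum_(0 <= t < S K) (c t)%:R * xs t).
Proof.
elim: K => [|K IH] hK z; first by exists (fun _ => 0%N).
have [c hc] := IH (ltnW hK) z.
set y := z - _ in hc.
have [_ hspan _] := hxn K.
have [a ha] := hspan y hc.
have [c' hc'] := choice (fun i : 'I_(dims K) => residue phi0 (a i)).
pose c'n i := oapp c' 0%N (insub i).
pose c'' t := if (t < S K)%N then c t else c'n (t - S K)%N.
exists c''.
have esum : \sum_(0 <= t < S K.+1) (c'' t)%:R * xs t =
    \sum_(0 <= t < S K) (c t)%:R * xs t + \sum_(i < dims K) (c' i)%:R * xn K i.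
  rewrite S_succ (big_cat_nat (leq0n _) (leq_addr _ _)) /=; congr (_ + _).
    by apply: eq_big_nat => t /andP[_ ht]; rewrite /c'' ht.
  rewrite -{1}[S K]add0n big_addn addKn big_mkord; apply: eq_bigr => i _.
  rewrite /c'' ltnNge leq_addl /= addnK /c'n valK /=.
  rewrite /xs (blk_eq (t := (i + S K)%N) hK) ?addnK //.
  by rewrite leq_addl /= S_succ addnC ltn_add2l.
have -> : z - \sum_(0 <= t < S K.+1) (c'' t)%:R * xs t =
    (y - \sum_(i < dims K) a i * xn K i) + \sum_(i < dims K) (a i - (c' i)%:R) * xn K i.
  rewrite esum /y.
  under [X in _ = _ + X]eq_bigr => i _ do rewrite mulrBl.
  rewrite sumrB; ring.
apply: ipowD => //=.
apply: (@ipow_sum_ord _ m K.+1) => i /=; apply: imul1; [exact: hc' | exact: xn_in].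
Qed.

Variable e : nat -> R.
Hypothesis he : forall t, pi (e t) = xs t /\ ideal_pow Mset (blk t) (e t).

Lemma R_decomp r : exists (c : nat -> nat) y r', ideal_pow Mset N y /\
  r = \sum_(0 <= t < S N) (c t)%:R * e t + y + p%:R * r'.
Proof.
have [c hc] := A_decomp (leqnn N) (pi r).
have [y [hy1 hy2]] := lift_pow hc.
have : pi (r - \sum_(0 <= t < S N) (c t)%:R * e t - y) = 0.
  rewrite !rmorphB hy1 rmorph_sum /=.
  have -> : \sum_(0 <= t < S N) pi ((c t)%:R * e t) = \sum_(0 <= t < S N) (c t)%:R * xs t.
    by apply: eq_bigr => t _; rewrite rmorphM rmorph_nat (proj1 (he t)).
  by rewrite subrr.
move/pi_ker => [r' hr']; exists c, y, r'; split=> //.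
rewrite -hr'; ring.
Qed.


Variable s : nat.
Variable phi : 'I_s -> {rmorphism R -> Zp}.
Definition Phi (x : R) : 'rV[Zp]_s := \row_i phi i x.
Definition Ev t := Phi (e t).

Lemma Phi_dvd k y : ideal_pow Mset k y -> exists u : 'rV[Zp]_s, Phi y = (p%:R : Zp) ^+ k *: u.
Proof.
move=> hy.
have [f hf] := choice (fun i : 'I_s => phi_dvd (phi i) hy).
by exists (\row_i f i); apply/rowP => i; rewrite !mxE hf.
Qed.

Lemma PhiD x y : Phi (x + y) = Phi x + Phi y.
Proof. by apply/rowP => i; rewrite !mxE rmorphD. Qed.

Lemma PhiMn k x : Phi (k%:R * x) = k%:R *: Phi x.
Proof. by apply/rowP => i; rewrite !mxE rmorphM rmorph_nat. Qed.

Lemma Phi_sum n (F : nat -> R) : Phi (\sum_(0 <= t < n) F t) = \sum_(0 <= t < n) Phi (F t).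
Proof.
apply/rowP => i; rewrite summxE mxE rmorph_sum; apply: eq_bigr => t _; by rewrite mxE.
Qed.

Lemma Phi_lin r c y r' : r = \sum_(0 <= t < S N) (c t)%:R * e t + y + p%:R * r' ->
  Phi r = \sum_(t < S N) (c t)%:R *: Ev t + Phi y + p%:R *: Phi r'.
Proof.
move=> ->; rewrite !PhiD PhiMn Phi_sum big_mkord; congr (_ + _ + _).
by apply: eq_bigr => t _; rewrite PhiMn.
Qed.

Lemma Phi_iter a r : exists (g : nat -> Zp) (u : 'rV[Zp]_s) r',
  Phi r = \sum_(t < S N) g t *: Ev t + (p%:R : Zp) ^+ N *: u + (p%:R : Zp) ^+ a *: Phi r'.
Proof.
elim: a r => [|a IH] r.
  exists (fun _ => 0), 0, r.
  by rewrite big1 ?scaler0 ?expr0 ?scale1r ?add0r // => t _; exact: scale0r.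
have [g [u [r' hr]]] := IH r.
have [c [y [r'' [hy hr']]]] := R_decomp r'.
have [u' hu'] := Phi_dvd hy.
have := Phi_lin hr'; rewrite hu' => hPr'.
exists (fun t => g t + (p%:R : Zp) ^+ a * (c t)%:R), (u + (p%:R : Zp) ^+ a *: u'), r''.
rewrite hr hPr'.
under [X in _ = X + _ + _]eq_bigr => t _ do rewrite scalerDl.
rewrite big_split /= !scalerDr scaler_sumr !scalerA exprSr [_ ^+ N * _]mulrC.
under [X in _ + (X + _ + _) = _]eq_bigr => t _ do rewrite scalerA.
by rewrite !addrA; congr (_ + _ + _); rewrite addrAC.
Qed.

Lemma Phi_span r : exists (g : nat -> Zp) (u : 'rV[Zp]_s),
  Phi r = \sum_(t < S N) g t *: Ev t + (p%:R : Zp) ^+ N *: u.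
Proof.
have [g [u [r' hr]]] := Phi_iter N r.
by exists g, (u + Phi r'); rewrite hr scalerDr addrA.
Qed.

End Enum.

Lemma main_sec (dims : nat -> nat) (dims_spec : forall k, graded_dim m k (dims k))
  (s : nat) (n : nat -> nat) (n_spec : forall i, (0 < i <= s)%N -> is_nth_term dims i (n i))
  (r : 'I_s -> R) (phi : 'I_s -> {rmorphism R -> Zpadic p}) :
  exists c : Zpadic p,
    \det (\matrix_(i < s, j < s) phi i (r j)) = (p%:R : Zpadic p) ^+ (\sum_(i < s) n i.+1) * c.
Proof.
case: (posnP s) => hs.
  by subst s; exists 1; rewrite det_mx00 big_ord0 expr0 mulr1.
have [xn hxn] : exists xn : nat -> nat -> A, forall k,
    graded_basis m k (fun i : 'I_(dims k) => xn k i) /\ forall i, (dims k <= i)%N -> xn k i = 0.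
  have h : forall k, exists f : nat -> A,
      graded_basis m k (fun i : 'I_(dims k) => f i) /\ forall i, (dims k <= i)%N -> f i = 0.
    move=> k; have [x hx] := dims_spec k.
    exists (fun i => oapp x 0 (insub i)); split.
      have -> : (fun i : 'I_(dims k) => oapp x 0 (insub (val i))) = x.
        by apply: funext => i; rewrite valK.
      exact: hx.
    by move=> i hi; rewrite insubN // -leqNgt.
  by have [f hf] := choice h; exists f.
have hxnb k := proj1 (hxn k).
have hxn0 k := proj2 (hxn k).
set B := (\sum_(i < s) n i.+1)%N.
set N := B.+1.
have [e he] : exists e : nat -> R, forall t,
    pi (e t) = xs dims xn N t /\ ideal_pow Mset (blk dims N t) (e t).
  have h : forall t, exists e, pi e = xs dims xn N t /\ ideal_pow Mset (blk dims N t) e.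
    move=> t; apply: lift_pow; exact: xs_in.
  by have [f hf] := choice h; exists f.
set phi0 := phi (Ordinal hs).
have hE : forall t, (t < S dims N)%N -> forall j, pdvd (p%:R : Zp) (blk dims N t) (Ev e phi t 0 j).
  move=> t _ j; rewrite /Ev /Phi mxE; apply: phi_dvd; exact: (proj2 (he t)).
have hw := blk_mono dims N.
have hB : (B <= \sum_(t < s) blk dims N t)%N.
  rewrite /B; apply: leq_sum => i _.
  have := n_spec i.+1 (ltn_ord i); rewrite /is_nth_term -!(big_mkord xpredT) -/(S dims _) -/(S dims _).
  move=> /andP[h1 h2].
  have hk : (n i.+1 < N)%N by rewrite ltnS /B (bigD1 i) //= leq_addr.
  by rewrite (blk_eq hk) // -ltnS h1 h2.
have hN : (B <= N)%N by apply: leqnSn.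
have hsp : forall j, spanv (p%:R : Zp) (S dims N) N (Ev e phi) (row j (\matrix_(i < s, j < s) phi i (r j))^T).
  move=> j.
  have -> : row j (\matrix_(i < s, j < s) phi i (r j))^T = Phi phi (r j).
    by apply/rowP => i; rewrite !mxE.
  exact: (Phi_span hxnb hxn0 phi0 he).
have := det_span hE hw hB hN hsp.
by rewrite det_tr => -[c hc]; exists c.
Qed.

End Main.

Theorem lemma2p4
  (p : nat) (p_prime : prime p)
  (* R : commutative noetherian local ring containing Z_p as a subring *)
  (R : comNzRingType) (R_noeth : is_noetherian R) (R_local : is_local_ring R)
  (iota : {rmorphism Zpadic p -> R}) (iota_inj : injective iota)
  (* A = R/pR, given by a surjective ring map pi : R -> A with kernel pR *)
  (A : comNzRingType) (pi : {rmorphism R -> A})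
  (pi_surj : forall a : A, exists r : R, pi r = a)
  (pi_ker : forall r : R, pi r = 0 <-> exists t : R, r = p%:R * t)
  (* m : the maximal ideal of A *)
  (m : A -> Prop) (m_max : is_maximal_ideal m)
  (* dims k = dim_{A/m} m^k/m^(k+1) *)
  (dims : nat -> nat) (dims_spec : forall k, graded_dim m k (dims k))
  (s : nat)
  (* n i = n_i(A) for 1 <= i <= s *)
  (n : nat -> nat) (n_spec : forall i, (0 < i <= s)%N -> is_nth_term dims i (n i))
  (r : 'I_s -> R) (phi : 'I_s -> {rmorphism R -> Zpadic p}) :
  exists c : Zpadic p,
    \det (\matrix_(i < s, j < s) phi i (r j))
      = (p%:R : Zpadic p) ^+ (\sum_(i < s) n i.+1) * c.
Proof.
by apply: (main_sec p_prime R_local pi_surj pi_ker m_max dims_spec n_spec).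
Qed.
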